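(* Let $\Omega$ be a locally compact metrisable space and $\{\mu_n\}_{n\in\mathbb{N}}\cup\{\mu\}\subset\mathcal{M}(\Omega)$. Then $\mu_n^+\to\mu^+$ vaguely and $\mu_n^-\to\mu^-$ vaguely if and only if $\mu_n\to\mu$ vaguely and $\limsup_{n\to\infty}|\mu_n|(K)\le|\mu|(K)$ for every compact set $K\subset\Omega$.
   Context: $\Omega$ carries its Borel $\sigma$-algebra. $\mathcal{M}(\Omega)$ denotes the set of finite signed Radon measures on $\Omega$: finite signed Borel measures $\mu$ with Hahn–Jordan decomposition $\mu=\mu^+-\mu^-$ whose variation $|\mu|=\mu^++\mu^-$ satisfies $|\mu|(A)=\sup\{|\mu|(K):K\subset A,\ K\text{ compact}\}$ for all Borel $A$. Vague convergence $\nu_n\to\nu$ means $\int f\,d\nu_n\to\int f\,d\nu$ for all continuous $f:\Omega\to\mathbb{R}$ with compact support. *)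

(* Defs.v *)
From HB Require Import structures.
From mathcomp Require Import all_boot all_order all_algebra.
From mathcomp Require Import all_classical all_reals all_analysis.
Set Implicit Arguments. Unset Strict Implicit. Unset Printing Implicit Defensive.
Import Order.TTheory GRing.Theory Num.Theory.
Import numFieldNormedType.Exports.
Local Open Scope classical_set_scope.
Local Open Scope ring_scope.

Notation Borel T := (g_sigma_algebraType (@open T)).

Section signed_measures.
Context (R : realType) (T : ptopologicalType).
Local Notation X := (Borel T).

Definition hahn_P (nu : {charge set X -> \bar R}) : set X :=
  proj1_sig (cid (Hahn_decomposition nu)).
Definition hahn_N (nu : {charge set X -> \bar R}) : set X :=
  proj1_sig (cid (proj2_sig (cid (Hahn_decomposition nu)))).
Lemma hahn_PN (nu : {charge set X -> \bar R}) :
  hahn_decomposition nu (hahn_P nu) (hahn_N nu).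
Proof. exact: (proj2_sig (cid (proj2_sig (cid (Hahn_decomposition nu))))). Qed.

Definition cpos (nu : {charge set X -> \bar R}) : {measure set X -> \bar R} :=
  jordan_pos (hahn_PN nu).
Definition cneg (nu : {charge set X -> \bar R}) : {measure set X -> \bar R} :=
  jordan_neg (hahn_PN nu).
Definition cvar (nu : {charge set X -> \bar R}) : set X -> \bar R :=
  charge_variation (hahn_PN nu).

Definition signed_radon (nu : {charge set X -> \bar R}) : Prop :=
  forall A : set X, measurable A ->
    cvar nu A = ereal_sup [set cvar nu K | K in [set K : set T | compact K /\ K `<=` A]].

Definition cintegral (nu : {charge set X -> \bar R}) (f : T -> R) : \bar R :=
  (\int[cpos nu]_x (f x)%:E - \int[cneg nu]_x (f x)%:E)%E.

Definition compact_support (f : T -> R) : Prop :=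
  compact (closure [set x | f x != 0]).

Definition vague_cvg (nu_ : nat -> {measure set X -> \bar R})
    (nu : {measure set X -> \bar R}) : Prop :=
  forall f : T -> R, continuous f -> compact_support f ->
    (fun n => (\int[nu_ n]_x (f x)%:E)%E) @ \oo --> (\int[nu]_x (f x)%:E)%E.

Definition cvague_cvg (mu_ : nat -> {charge set X -> \bar R})
    (mu : {charge set X -> \bar R}) : Prop :=
  forall f : T -> R, continuous f -> compact_support f ->
    (fun n => cintegral (mu_ n) f) @ \oo --> cintegral mu f.

End signed_measures.

(* Main.v *)
Require Import Defs.
From HB Require Import structures.
From mathcomp Require Import all_boot all_order all_algebra.
From mathcomp Require Import all_classical all_reals all_analysis finmap.
From mathcomp Require Import ring lra zify.
Set Implicit Arguments. Unset Strict Implicit. Unset Printing Implicit Defensive.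
Import Order.TTheory GRing.Theory Num.Theory.
Import numFieldNormedType.Exports.
Local Open Scope classical_set_scope.
Local Open Scope ring_scope.

Lemma cpt_nbhd (T : ptopologicalType) (hT : hausdorff_space T)
  (lcT : locally_compact [set: T]) (K : set T) : compact K ->
  exists V : set T, [/\ open V, K `<=` V & compact (closure V)].
Proof.
move=> cK.
have hU : forall x : T, exists U : set T, nbhs x U /\ compact U.
  move=> x; have [U + [cU _]] := lcT x I; rewrite withinET => Ux.
  by exists U.
pose U x := proj1_sig (cid (hU x)).
have UP x : nbhs x (U x) /\ compact (U x) := proj2_sig (cid (hU x)).
have cK' : cover_compact K by rewrite -compact_cover.
case: (cK' T K (fun x => interior (U x))).
- by move=> i _; exact: open_interior.
- by move=> x Kx; exists x => //; exact: (UP x).1.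
move=> D' _ KD; set V := cover _ _ in KD; exists V; split => //.
  by apply: bigcup_open => i _; exact: open_interior.
have cC : compact (cover [set` D'] U).
  by rewrite /cover bigcup_fset; apply: bigsetU_compact => i _; exact: (UP i).2.
have := @subclosed_compact _ (closure V) _ (@closed_closure _ V) cC.
apply.
have clC : closed (cover [set` D'] U) by exact: compact_closed.
rewrite [X in _ `<=` X](closure_id _).1 //.
by apply: closureS => y [i Di /interior_subset Uy]; exists i.
Qed.

Lemma urysohn01 (R : realType) (T : pseudoMetricType R) (A B : set T) :
  closed A -> closed B -> A `&` B = set0 ->
  exists f : T -> R, [/\ continuous f, (forall x, 0 <= f x <= 1),
     (forall x, A x -> f x = 1) & (forall x, B x -> f x = 0)].
Proof.
move=> cA cB AB.
have : uniform_separator B A.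
  by apply: (proj1 (@normal_separatorP R T) pseudometric_normal) => //; rewrite setIC.
move=> /(@uniform_separatorP _ R) [f [cf f01 fB fA]].
exists f; split => //.
- move=> x; have /f01 : range f (f x) by exists x.
  by rewrite /= in_itv.
- by move=> x Ax; apply: fA; exists x.
- by move=> x Bx; apply: fB; exists x.
Qed.

Section outer.
Context (R : realType) (T : pseudoPMetricType R) (hT : hausdorff_space T).
Local Notation X := (Borel T).

Lemma closed_mB (A : set T) : closed A -> measurable (A : set X).
Proof. move=> cA; rewrite -(setCK A); apply: measurableC; apply: sub_sigma_algebra; exact: closed_openC. Qed.

Lemma shrink_closure (K V0 : set T) : closed K -> K `<=` V0 ->
  let F := fun n : nat => closure (V0 `&` \bigcup_(x in K) ball x (n.+1%:R^-1)) in
  [/\ forall n, closed (F n), forall n, K `<=` F n, nonincreasing_seq F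
    & \bigcap_n F n = K].
Proof.
move=> cK KV F; split.
- by move=> n; exact: closed_closure.
- move=> n x Kx; apply: subset_closure; split; first exact: KV.
  by exists x => //; apply: ballxx.
- move=> n m nm; apply/subsetPset; apply: closureS => y [V0y [x Kx bxy]]; split => //.
  exists x => //; apply: le_ball bxy; rewrite lef_pV2 ?posrE// ler_nat ltnS //.
apply/seteqP; split; last by move=> x Kx n _; apply: subset_closure; split;
  [exact: KV|exists x => //; exact: ballxx].
move=> y Fy; rewrite (closure_id K).1 //; move=> B /nbhs_ballP [e /= e0 yeB].
pose n := Num.Def.trunc ((e / 2)^-1).
have hn : n.+1%:R^-1 < e / 2.
  rewrite -[X in _ < X](invrK (e/2)) ltf_pV2 ?posrE ?invr_gt0 ?divr_gt0 //.
  exact: truncnS_gt.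
have [z [[_ [x Kx bxz]] byz]] := Fy n I _ (nbhsx_ballx y (n.+1%:R^-1) ltac:(by rewrite invr_gt0)).
exists x; split => //; apply: yeB.
have := ball_triangle byz (ball_sym bxz).
apply: le_ball; rewrite (splitr e); apply: ltW; exact: ltrD.
Qed.

Lemma outer_cpt (lcT : locally_compact [set: T]) (m : {measure set X -> \bar R}) :
  (m setT < +oo)%E -> forall K : set T, compact K -> forall e : R, 0 < e ->
  exists V : set T, [/\ open V, K `<=` V, compact (closure V)
     & (m (closure V) <= m K + e%:E)%E].
Proof.
move=> mfin K cK e e0.
have [V0 [oV0 KV0 cV0]] := cpt_nbhd hT lcT cK.
have clK : closed K by exact: compact_closed.
have [clF KF ndF capF] := shrink_closure clK KV0.
set F := (fun n => closure _) in clF KF ndF capF.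
have mK : measurable (K : set X) := closed_mB clK.
have mKfin : m K \is a fin_num.
  rewrite ge0_fin_numE//; apply: le_lt_trans mfin; apply: le_measure => //; exact/mem_set.
have cvgF : (m \o F) @ \oo --> m K.
  rewrite -capF; apply: nonincreasing_cvg_mu => //.
  - apply: le_lt_trans mfin; apply: le_measure; [apply/mem_set; apply: closed_mB; exact: clF|exact/mem_set|by []].
  - by move=> i; apply: closed_mB; exact: clF.
  - by rewrite capF.
rewrite -[m K](fineK mKfin) in cvgF.
have := cvgF _ (@nbhs_open_ereal_lt _ (fine (m K)) (fun r => r + e) ltac:(by rewrite ltrDl)).
move=> -[N _ HN].
have {HN} HN := HN N (leqnn N).
have VF : closure (V0 `&` \bigcup_(x in K) interior (ball x (N.+1%:R^-1))) `<=` F N.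
  by apply: closureS => y [V0y [x Kx /interior_subset bxy]]; split => //; exists x.
exists (V0 `&` \bigcup_(x in K) interior (ball x (N.+1%:R^-1))); split.
- apply: openI => //; apply: bigcup_open => x _; exact: open_interior.
- move=> x Kx; split; [exact: KV0|exists x => //].
  by apply: nbhsx_ballx; rewrite invr_gt0.
- apply: (subclosed_compact (@closed_closure _ _) cV0).
  by apply: closureS => y [].
- rewrite -[m K](fineK mKfin) -EFinD; apply: le_trans (ltW HN); apply: le_measure => //; apply/mem_set.
  + apply: closed_mB; exact: closed_closure.
  + apply: closed_mB; exact: clF.
Qed.
End outer.

Section integ.
Context (R : realType) (T : pseudoPMetricType R).
Local Notation X := (Borel T).
Implicit Types (m : {finite_measure set X -> \bar R}) (f g : T -> R).

Definition good f := continuous f /\ compact_support f.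
Definition bmeas f := measurable_fun (setT : set X) f /\ exists M, forall x, `|f x| <= M.
Local Notation Ri m f := (Rintegral m setT f).

Lemma cont_mB f : continuous f -> measurable_fun (setT : set X) f.
Proof.
move=> /continuousP cf; apply: (measurability _ (measurable_realfun.RGenOpens.measurableE R)).
move=> _ [_ [a [b ->] <-]]; apply: measurableI => //; apply: sub_sigma_algebra.
exact/cf/interval_open.
Qed.

Lemma good_bound f : good f -> exists M, 0 < M /\ forall x, `|f x| <= M.
Proof.
move=> [cf cs].
have cI : compact (f @` closure [set x | f x != 0]).
  by apply: continuous_compact => //; exact: continuous_subspaceT.
have [M [_ HM]] := compact_bounded cI.
exists (`|M| + 1); split; first by have := normr_ge0 M; lra.
move=> x; have [->|fx0] := eqVneq (f x) 0.
  by rewrite normr0; have := normr_ge0 M; lra.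
apply: (HM (`|M| + 1)); first by have := ler_norm M; lra.
by exists x => //; apply: subset_closure.
Qed.

Lemma good_bmeas f : good f -> bmeas f.
Proof.
move=> gf; split; first exact: cont_mB gf.1.
by have [M [_ HM]] := good_bound gf; exists M.
Qed.

Lemma bmeas_int m f : bmeas f -> m.-integrable setT (EFin \o f).
Proof.
move=> [mf [M hM]]; apply: measurable_bounded_integrable => //.
- by apply: fin_num_fun_lty; exact: fin_num_measure.
- exists M; split; first exact: num_real.
  by move=> y My x _; apply: le_trans (hM x) (ltW My).
Qed.

Lemma bmeas_indic c (A : set X) : measurable A -> bmeas (fun x => c * \1_A x).
Proof.
move=> mA; split.
  apply: (@measurable_realfun.measurable_funM _ _ _ _ (cst c) (\1_A)); first exact: measurable_cst.
  exact: measurable_realfun.measurable_indic.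
exists `|c| => x; rewrite normrM /indic; case: (x \in A); rewrite ?normr1 ?normr0 ?mulr1 ?mulr0 //.
Qed.

Lemma J_Ri m f : bmeas f -> (\int[m]_x (f x)%:E)%E = (Ri m f)%:E.
Proof. by move=> bf; rewrite /Rintegral fineK //; exact: integrable_fin_num (bmeas_int m bf). Qed.

Lemma Ri_cind m c (A : set X) : measurable A -> Ri m (fun x => c * \1_A x) = c * fine (m A).
Proof.
move=> mA; rewrite RintegralZl //; last exact: integrable_indic.
by rewrite /Rintegral integral_indic // setIT.
Qed.

Lemma Ri_le m f g : bmeas f -> bmeas g -> (forall x, f x <= g x) -> Ri m f <= Ri m g.
Proof. by move=> bf bg fg; apply: le_Rintegral => //; exact: bmeas_int. Qed.

Lemma Ri_ge0 m f : (forall x, 0 <= f x) -> 0 <= Ri m f.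
Proof. by move=> f0; apply: Rintegral_ge0. Qed.

Lemma Ri_D m f g : bmeas f -> bmeas g -> Ri m (fun x => f x + g x) = Ri m f + Ri m g.
Proof. by move=> bf bg; apply: RintegralD => //; exact: bmeas_int. Qed.

Lemma Ri_B m f g : bmeas f -> bmeas g -> Ri m (fun x => f x - g x) = Ri m f - Ri m g.
Proof. by move=> bf bg; apply: RintegralB => //; exact: bmeas_int. Qed.

Lemma Ri_eq m f g : (forall x, f x = g x) -> Ri m f = Ri m g.
Proof. by move=> fg; apply: eq_Rintegral => x _; exact: fg. Qed.

End integ.

Section helpers.
Context (R : realType) (T : pseudoPMetricType R).
Local Notation X := (Borel T).

Lemma ind1 (A : set T) x : A x -> \1_A x = 1 :> R.
Proof. by move=> Ax; rewrite indicE mem_set. Qed.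
Lemma ind0 (A : set T) x : ~ A x -> \1_A x = 0 :> R.
Proof. by move=> Ax; rewrite indicE memNset. Qed.

Lemma bmeas_cont (f : T -> R) M : continuous f -> (forall x, `|f x| <= M) -> bmeas f.
Proof. by move=> cf hM; split; [exact: cont_mB|exists M]. Qed.

Lemma good_of (f : T -> R) (B : set T) : continuous f ->
  (forall x, f x != 0 -> B x) -> compact (closure B) -> good f.
Proof.
move=> cf fB cB; split => //.
apply: (subclosed_compact (@closed_closure _ _) cB).
by apply: closureS => x /= /fB.
Qed.

Lemma notS_0 (g : T -> R) x : ~ closure [set x | g x != 0] x -> g x = 0.
Proof.
move=> nx; apply/eqP; apply: contra_notT nx => gx; exact: subset_closure.
Qed.
End helpers.

Section LB.
Context (R : realType) (T : pseudoPMetricType R) (hT : hausdorff_space T).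
Local Notation X := (Borel T).
Local Notation Ri m f := (Rintegral m setT f).
Variables (p_ q_ : nat -> {finite_measure set X -> \bar R})
  (p q : {finite_measure set X -> \bar R}).

Definition Hcv := forall f, good f ->
  (fun n => Ri (p_ n) f - Ri (q_ n) f) @ \oo --> Ri p f - Ri q f.
Definition Hsep := forall e, 0 < e -> exists C D : set T,
  [/\ compact C, compact D, C `&` D = set0,
      (p (~` C) <= e%:E)%E & (q (~` D) <= e%:E)%E].

Lemma LB : Hcv -> Hsep -> forall g, good g -> (forall x, 0 <= g x) ->
  forall e, 0 < e -> \forall n \near \oo, Ri p g - e <= Ri (p_ n) g.
Proof.
move=> h1 h3 g gg g0 e e0.
have [M [M0 hM]] := good_bound gg.
have gM x : g x <= M by apply: le_trans (hM x); exact: ler_norm.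
have e10 : 0 < e / (4 * M) by rewrite divr_gt0 // mulr_gt0.
have [C [D [cC cD CD pC qD]]] := h3 _ e10.
have [phi [cphi phi01 phiC phiD]] := urysohn01 (compact_closed hT cC) (compact_closed hT cD) CD.
pose h x := g x * phi x.
have gh : good h.
  apply: (good_of (B := [set x | g x != 0])); last exact: gg.2.
    by move=> x; apply: continuousM; [exact: gg.1|exact: cphi].
  by move=> x /=; rewrite /h; apply: contra => /eqP ->; rewrite mul0r.
have bh := good_bmeas gh; have bg := good_bmeas gg.
have mCc : measurable (~` C : set X).
  by apply: measurableC; apply: closed_mB; exact: compact_closed.
have mDc : measurable (~` D : set X).
  by apply: measurableC; apply: closed_mB; exact: compact_closed.
have i1 : Ri p g <= Ri p h + M * fine (p (~` C)).
  rewrite -Ri_cind // -Ri_D //; last exact: bmeas_indic.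
  apply: Ri_le => //.
    case: bh => mh [Mh hMh]; split.
      apply: measurable_realfun.measurable_funD => //; exact: (bmeas_indic M mCc).1.
    exists (Mh + `|M|) => x; apply: le_trans (ler_normD _ _) _; apply: lerD => //.
    by rewrite normrM; case: (pselect (C x)) => Cx;
      [rewrite ind0 ?normr0 ?mulr0 //; by move/(_ Cx)|rewrite ind1 ?normr1 ?mulr1].
  move=> x; rewrite /h; case: (pselect (C x)) => Cx.
    by rewrite phiC // ind0 ?mulr0 ?mulr1 ?addr0 //; move/(_ Cx).
  rewrite ind1 // mulr1; have := phi01 x; have := g0 x; have := gM x; nra.
have i2 : Ri q h <= M * fine (q (~` D)).
  rewrite -Ri_cind //; apply: Ri_le => //; first exact: bmeas_indic.
  move=> x; rewrite /h; case: (pselect (D x)) => Dx.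
    by rewrite phiD // mulr0 ind0 ?mulr0 //; move/(_ Dx).
  rewrite ind1 // mulr1; have := phi01 x; have := g0 x; have := gM x; nra.
have i3 : M * fine (p (~` C)) <= e / 4.
  have -> : e / 4 = M * (e / (4 * M)) by field; rewrite gt_eqF.
  rewrite ler_pM2l //; rewrite -lee_fin fineK //; exact: fin_num_measure.
have i4 : M * fine (q (~` D)) <= e / 4.
  have -> : e / 4 = M * (e / (4 * M)) by field; rewrite gt_eqF.
  rewrite ler_pM2l //; rewrite -lee_fin fineK //; exact: fin_num_measure.
have i5 n : Ri (p_ n) h <= Ri (p_ n) g.
  apply: Ri_le => // x; rewrite /h; have := phi01 x; have := g0 x; nra.
have i6 n : 0 <= Ri (q_ n) h.
  apply: Ri_ge0 => x; rewrite /h; have := phi01 x; have := g0 x; nra.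
have /cvgrPdist_le /(_ (e / 2)) := h1 h gh.
have e20 : 0 < e / 2 by rewrite divr_gt0.
move=> /(_ e20); apply: filterS => n /=.
rewrite ler_norml => /andP[hn1 hn2].
have := i5 n; have := i6 n; lra.
Qed.
End LB.

Section UB.
Context (R : realType) (T : pseudoPMetricType R) (hT : hausdorff_space T)
  (lcT : locally_compact [set: T]).
Local Notation X := (Borel T).
Local Notation Ri m f := (Rintegral m setT f).
Variables (p_ q_ : nat -> {finite_measure set X -> \bar R})
  (p q : {finite_measure set X -> \bar R}).

Definition Hlim := forall K : set T, compact K -> forall e, 0 < e ->
  \forall n \near \oo, fine (p_ n K) + fine (q_ n K) <= fine (p K) + fine (q K) + e.

Lemma Hcv_swap : Hcv p_ q_ p q -> Hcv q_ p_ q p.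
Proof.
move=> h1 f gf.
have -> : (fun n => Ri (q_ n) f - Ri (p_ n) f) = - (fun n => Ri (p_ n) f - Ri (q_ n) f).
  by apply/funext => n /=; rewrite opprB.
rewrite -[X in _ --> X]opprB; exact: cvgN (h1 f gf).
Qed.

Lemma Hsep_swap : Hsep p q -> Hsep q p.
Proof.
move=> h3 e e0; have [C [D [cC cD CD pC qD]]] := h3 e e0.
by exists D, C; split => //; rewrite setIC.
Qed.

Lemma UB : Hcv p_ q_ p q -> Hsep p q -> Hlim -> forall g, good g -> (forall x, 0 <= g x) ->
  forall e, 0 < e -> \forall n \near \oo, Ri (p_ n) g <= Ri p g + e.
Proof.
move=> h1 h3 h2 g gg g0 e e0.
have h1' := Hcv_swap h1; have h3' := Hsep_swap h3.
have [M [M0 hM]] := good_bound gg.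
have gM x : g x <= M by apply: le_trans (hM x); exact: ler_norm.
set S := closure [set x | g x != 0].
have cS : compact S := gg.2.
have clS : closed S := @closed_closure _ _.
have e10 : 0 < e / (6 * M) by rewrite divr_gt0 // mulr_gt0.
have pfin : (p setT < +oo)%E by apply: fin_num_fun_lty; exact: fin_num_measure.
have qfin : (q setT < +oo)%E by apply: fin_num_fun_lty; exact: fin_num_measure.
have [V1 [oV1 SV1 cV1 pV1]] := outer_cpt hT lcT pfin cS e10.
have [V2 [oV2 SV2 cV2 qV2]] := outer_cpt hT lcT qfin cS e10.
pose V := V1 `&` V2.
have oV : open V by exact: openI.
have SV : S `<=` V by move=> x Sx; split; [exact: SV1|exact: SV2].
have clV1 : closure V `<=` closure V1 by apply: closureS; exact: subIsetl.
have clV2 : closure V `<=` closure V2 by apply: closureS; exact: subIsetr.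
have cV : compact (closure V) := subclosed_compact (@closed_closure _ _) cV1 clV1.
have mclV : measurable (closure V : set X) := closed_mB (@closed_closure _ _).
have mclV1 : measurable (closure V1 : set X) := closed_mB (@closed_closure _ _).
have mclV2 : measurable (closure V2 : set X) := closed_mB (@closed_closure _ _).
have mS : measurable (S : set X) := closed_mB clS.
have hMe : M * (e / (6 * M)) = e / 6 by field; rewrite gt_eqF.
have pV : M * fine (p (closure V)) <= M * fine (p S) + e / 6.
  rewrite -hMe -mulrDr ler_pM2l // -lee_fin EFinD !fineK ?fin_num_measure //.
  by apply: le_trans pV1; apply: le_measure => //; apply/mem_set.
have qV : M * fine (q (closure V)) <= M * fine (q S) + e / 6.
  rewrite -hMe -mulrDr ler_pM2l // -lee_fin EFinD !fineK ?fin_num_measure //.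
  by apply: le_trans qV2; apply: le_measure => //; apply/mem_set.
have SVd : S `&` ~` V = set0.
  by apply/seteqP; split => // x [Sx nVx]; apply: nVx; exact: SV.
have [psi [cpsi psi01 psiS psiV]] := urysohn01 clS (open_closedC oV) SVd.
pose Mp x := M * psi x.
pose k x := M * psi x - g x.
have gk : good k.
  apply: (good_of (B := V)) => //.
    by move=> x; apply: cvgB; [apply: cvgMr; exact: cpsi|exact: gg.1].
  move=> x kx0; apply: contrapT => nVx; move: kx0; rewrite /k psiV //.
  rewrite (@notS_0 _ _ g x); first by rewrite mulr0 subrr eqxx.
  by move=> Sx; apply: nVx; exact: SV.
have k0 x : 0 <= k x.
  rewrite /k; case: (pselect (S x)) => Sx.
    by rewrite psiS // mulr1 subr_ge0.
  rewrite (@notS_0 _ _ g x) // subr0; have := psi01 x; nra.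
have bMp : bmeas Mp.
  apply: (@bmeas_cont _ _ _ M); first by move=> x; apply: cvgMr; exact: cpsi.
  by move=> x; rewrite /Mp ger0_norm; have := psi01 x; nra.
have bk := good_bmeas gk; have bg := good_bmeas gg.
have a (m : {finite_measure set X -> \bar R}) : Ri m k + Ri m g = Ri m Mp.
  by rewrite -Ri_D //; apply: Ri_eq => x; rewrite /k /Mp subrK.
have b (m : {finite_measure set X -> \bar R}) : Ri m Mp <= M * fine (m (closure V)).
  rewrite -Ri_cind //; apply: Ri_le => //; first exact: bmeas_indic.
  move=> x; rewrite /Mp; case: (pselect (closure V x)) => Vx.
    by rewrite ind1 //; have := psi01 x; nra.
  rewrite ind0 // psiV // => Vx'; apply: Vx; exact: subset_closure.
have c (m : {finite_measure set X -> \bar R}) : M * fine (m S) <= Ri m Mp.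
  rewrite -Ri_cind //; apply: Ri_le => //; first exact: bmeas_indic.
  move=> x; rewrite /Mp; case: (pselect (S x)) => Sx.
    by rewrite ind1 // psiS.
  by rewrite ind0 // mulr0; have := psi01 x; nra.
have e60 : 0 < e / 6 by rewrite divr_gt0.
have E1 := h2 _ cV _ e10.
have E2 := LB hT h1 h3 gk k0 e60.
have E3 := LB hT h1' h3' gk k0 e60.
have E4 := LB hT h1' h3' gg g0 e60.
case: E1 => [N1 _ HN1]; case: E2 => [N2 _ HN2]; case: E3 => [N3 _ HN3]; case: E4 => [N4 _ HN4].
exists (maxn N1 (maxn N2 (maxn N3 N4))) => // n /= hn.
move: hn; rewrite !geq_max => /and4P[hn1 hn2 hn3 hn4].
have E1n := HN1 n hn1; have E2n := HN2 n hn2.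
have E3n := HN3 n hn3; have E4n := HN4 n hn4.
have E1M := ler_wpM2l (ltW M0) E1n; rewrite !mulrDr hMe in E1M.
have := a (p_ n); have := a (q_ n); have := b (p_ n); have := b (q_ n).
have := a p; have := a q; have := c p; have := c q.
lra.
Qed.
End UB.

Lemma maxBmax (R : realType) (a : R) : a = Num.max a 0 - Num.max (- a) 0.
Proof.
rewrite /Order.max; case: ifPn => h1; case: ifPn => h2.
- have h1' : a < 0 := h1; have h2' : - a < 0 := h2; lra.
- have h1' : a < 0 := h1; have h2' : ~~ (- a < 0) := h2; rewrite -leNgt in h2'; lra.
- have h1' : ~~ (a < 0) := h1; have h2' : - a < 0 := h2; rewrite -leNgt in h1'; lra.
- have h1' : ~~ (a < 0) := h1; have h2' : ~~ (- a < 0) := h2; rewrite -!leNgt in h1' h2'; lra.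
Qed.

Section vague.
Context (R : realType) (T : pseudoPMetricType R) (hT : hausdorff_space T)
  (lcT : locally_compact [set: T]).
Local Notation X := (Borel T).
Local Notation Ri m f := (Rintegral m setT f).
Variables (p_ q_ : nat -> {finite_measure set X -> \bar R})
  (p q : {finite_measure set X -> \bar R}).

Lemma cvg_nonneg : Hcv p_ q_ p q -> Hsep p q -> Hlim p_ q_ p q ->
  forall g, good g -> (forall x, 0 <= g x) ->
  (fun n => Ri (p_ n) g) @ \oo --> Ri p g.
Proof.
move=> h1 h3 h2 g gg g0; apply/cvgrPdist_le => e e0.
have E1 := LB hT h1 h3 gg g0 e0.
have E2 := UB hT lcT h1 h3 h2 gg g0 e0.
case: E1 => [N1 _ HN1]; case: E2 => [N2 _ HN2].
exists (maxn N1 N2) => // n /= hn.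
move: hn; rewrite !geq_max => /andP[hn1 hn2].
have := HN1 n hn1; have := HN2 n hn2.
rewrite ler_norml; move=> ? ?; apply/andP; split; lra.
Qed.

Lemma good_pos (f : T -> R) : good f -> good (fun x => Num.max (f x) 0).
Proof.
move=> gf; apply: (good_of (B := [set x | f x != 0])); last exact: gf.2.
  move=> x; apply: (@continuous_max _ _ f (cst 0)); first exact: gf.1.
  exact: cst_continuous.
move=> x /=; apply: contra => /eqP ->; by rewrite maxxx.
Qed.

Lemma cvg_good : Hcv p_ q_ p q -> Hsep p q -> Hlim p_ q_ p q ->
  forall f, good f -> (fun n => Ri (p_ n) f) @ \oo --> Ri p f.
Proof.
move=> h1 h3 h2 f gf.
have gN : good (fun x => - f x).
  apply: (good_of (B := [set x | f x != 0])); last exact: gf.2.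
    by move=> x; apply: cvgN; exact: gf.1.
  by move=> x /=; rewrite oppr_eq0.
have gp := good_pos gf; have gn := good_pos gN.
have fE (m : {finite_measure set X -> \bar R}) : Ri m f = Ri m (fun x => Num.max (f x) 0) - Ri m (fun x => Num.max (- f x) 0).
  rewrite -Ri_B; try exact: good_bmeas.
  by apply: Ri_eq => x; exact: maxBmax.
rewrite fE; under eq_fun do rewrite fE.
apply: cvgB; apply: cvg_nonneg => // x; rewrite /Order.max; case: ifPn => // h; have hh : ~~ (_ < 0) := h; by rewrite -leNgt in hh.
Qed.
End vague.

Section hahn.
Context (R : realType) (T : pseudoPMetricType R) (hT : hausdorff_space T).
Local Notation X := (Borel T).
Variable nu : {charge set X -> \bar R}.

Lemma mhP : measurable (hahn_P nu).
Proof. by have [[]] := hahn_PN nu. Qed.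
Lemma mhN : measurable (hahn_N nu).
Proof. by have [_ []] := hahn_PN nu. Qed.

Lemma cposE (A : set X) : measurable A -> cpos nu A = nu (A `&` hahn_P nu).
Proof. by move=> mA; rewrite /cpos /= jordan_posE cjordan_posE /crestr0 mem_set. Qed.

Lemma cnegE (A : set X) : measurable A -> cneg nu A = (- nu (A `&` hahn_N nu))%E.
Proof. by move=> mA; rewrite /cneg /= jordan_negE cjordan_negE /crestr0 mem_set. Qed.

Lemma cvarE (A : set X) : cvar nu A = (cpos nu A + cneg nu A)%E.
Proof. by []. Qed.

Lemma cvar_fin (A : set X) : measurable A -> cvar nu A \is a fin_num.
Proof. by move=> mA; rewrite cvarE fin_numD !fin_num_measure. Qed.

Lemma cpos_le_cvar (A : set X) : (cpos nu A <= cvar nu A)%E.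
Proof. by rewrite cvarE leeDl. Qed.
Lemma cneg_le_cvar (A : set X) : (cneg nu A <= cvar nu A)%E.
Proof. by rewrite cvarE leeDr. Qed.

Lemma radon_inner (rad : signed_radon nu) (A : set X) : measurable A ->
  forall e, 0 < e -> exists K : set T, [/\ compact K, K `<=` A &
    (cvar nu (A `&` ~` K) <= e%:E)%E].
Proof.
move=> mA e e0.
have fA := cvar_fin mA.
have : (cvar nu A - e%:E < cvar nu A)%E.
  by rewrite -(fineK fA) -EFinB lte_fin ltrBlDr ltrDl.
rewrite {2}(rad A mA) => /ereal_sup_gt [_ [K [cK KA] <-]] hK.
exists K; split => //.
have mK : measurable (K : set X) by apply: closed_mB; exact: compact_closed.
have mAK : measurable (A `&` ~` K : set X) by apply: measurableI => //; exact: measurableC.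
have split : cvar nu A = (cvar nu K + cvar nu (A `&` ~` K))%E.
  rewrite -measureU //; last by rewrite setICA setICr setI0.
  congr (cvar nu _); rewrite setUIr setUCr setIT.
  by apply/seteqP; split => x /=; [right|case => // /KA].
move: hK; rewrite split -(fineK (cvar_fin mK)) -(fineK (cvar_fin mAK)).
rewrite -EFinD lte_fin lee_fin => h; lra.
Qed.

End hahn.

Section limsup.
Context (R : realType).
Lemma limsup_ev (u : nat -> \bar R) (l : R) : (limn_esup u <= l%:E)%E ->
  forall e, 0 < e -> \forall n \near \oo, (u n <= (l + e)%:E)%E.
Proof.
move=> H e e0.
have : (limn_esup u < (l + e)%:E)%E by apply: le_lt_trans H _; rewrite lte_fin ltrDl.
rewrite /limn_esup limf_esupE => /ereal_inf_lt [_ [V HV <-]] hV.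
apply: filterS HV => n Vn; apply: le_trans (ltW hV); apply: ereal_sup_ubound; exists n => //.
Qed.

Lemma ev_limsup (u : nat -> \bar R) (l : R) :
  (forall e, 0 < e -> \forall n \near \oo, (u n <= (l + e)%:E)%E) -> (limn_esup u <= l%:E)%E.
Proof.
move=> H; apply/lee_addgt0Pr => e e0.
rewrite /limn_esup limf_esupE.
apply: le_trans; first by apply: ereal_inf_lbound; exists [set n | (u n <= (l + e)%:E)%E] => //; exact: H.
by apply: ge_ereal_sup => _ [n Vn <-]; rewrite -EFinD.
Qed.

Lemma cvg_EFinP (r : nat -> R) (a : R) : r @ \oo --> a <-> (fun n => (r n)%:E) @ \oo --> a%:E.
Proof.
split => h; last by move/fine_cvgP : h => [_ h].
by apply: cvg_EFin => //; exact: nearW.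
Qed.
End limsup.

Section main.
Context (R : realType) (T : pseudoPMetricType R) (hT : hausdorff_space T)
  (lcT : locally_compact [set: T]).
Local Notation X := (Borel T).
Local Notation Ri m f := (Rintegral m setT f).

Lemma setI_tri (A B : set T) : (A `&` B) `&` A = B `&` A.
Proof. by rewrite setIAC setIid setIC. Qed.

Lemma hsep_of (nu : {charge set X -> \bar R}) : signed_radon nu -> Hsep (cpos nu) (cneg nu).
Proof.
move=> rad e e0.
have [C [cC CP hC]] := radon_inner hT rad (@mhP _ _ nu) e0.
have [D [cD DN hD]] := radon_inner hT rad (@mhN _ _ nu) e0.
have mC : measurable (C : set X) by apply: closed_mB; exact: compact_closed.
have mD : measurable (D : set X) by apply: closed_mB; exact: compact_closed.
exists C, D; split => //.
- apply/seteqP; split => // x [/CP Px /DN Nx].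
  have [_ _ _ PN] := hahn_PN nu.
  have : (hahn_P nu `&` hahn_N nu) x by split.
  by rewrite PN.
- apply: le_trans hC; apply: le_trans (cpos_le_cvar _ _); rewrite le_eqVlt; apply/orP; left; apply/eqP.
  rewrite !cposE //; [|exact: measurableC|apply: measurableI; [exact: mhP|exact: measurableC]].
  by rewrite setI_tri.
- apply: le_trans hD; apply: le_trans (cneg_le_cvar _ _); rewrite le_eqVlt; apply/orP; left; apply/eqP.
  rewrite !cnegE //; [|exact: measurableC|apply: measurableI; [exact: mhN|exact: measurableC]].
  by rewrite setI_tri.
Qed.

Variables (mu_ : nat -> {charge set X -> \bar R}) (mu : {charge set X -> \bar R}).
Let p_ : nat -> {finite_measure set X -> \bar R} := fun n => cpos (mu_ n).
Let q_ : nat -> {finite_measure set X -> \bar R} := fun n => cneg (mu_ n).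
Let p : {finite_measure set X -> \bar R} := cpos mu.
Let q : {finite_measure set X -> \bar R} := cneg mu.

Lemma hlim_of : (forall K : set T, compact K ->
     (limn_esup (fun n => cvar (mu_ n) K) <= cvar mu K)%E) -> Hlim p_ q_ p q.
Proof.
move=> H K cK e e0.
have mK : measurable (K : set X) by apply: closed_mB; exact: compact_closed.
have fE (nu : {charge set X -> \bar R}) : fine (cvar nu K) = fine (cpos nu K) + fine (cneg nu K).
  by rewrite cvarE fineD // fin_num_measure.
have eE (nu : {charge set X -> \bar R}) : cvar nu K = (fine (cpos nu K) + fine (cneg nu K))%:E.
  by rewrite -fE fineK // cvar_fin.
have := H K cK; rewrite -(fineK (cvar_fin mu mK)) => /limsup_ev /(_ e e0).
by apply: filterS => n; rewrite eE fE lee_fin.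
Qed.

Lemma hcv_of : cvague_cvg mu_ mu -> Hcv p_ q_ p q.
Proof.
move=> H f gf; have := H f gf.1 gf.2; rewrite /cintegral.
have eq (nu : {charge set X -> \bar R}) : (\int[cpos nu]_x (f x)%:E - \int[cneg nu]_x (f x)%:E)%E =
    (Ri (cpos nu) f - Ri (cneg nu) f)%:E.
  by rewrite !(J_Ri _ (good_bmeas gf)).
rewrite eq (_ : (fun n => _) = (fun n => (Ri (cpos (mu_ n)) f - Ri (cneg (mu_ n)) f)%:E)).
  by move/cvg_EFinP.
by apply/funext => n; rewrite eq.
Qed.

Lemma back : signed_radon mu -> cvague_cvg mu_ mu ->
  (forall K : set T, compact K -> (limn_esup (fun n => cvar (mu_ n) K) <= cvar mu K)%E) ->
  vague_cvg (fun n => cpos (mu_ n)) (cpos mu) /\ vague_cvg (fun n => cneg (mu_ n)) (cneg mu).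
Proof.
move=> rad hc hl.
have h1 := hcv_of hc; have h2 := hlim_of hl; have h3 := hsep_of rad.
have h2' : Hlim q_ p_ q p.
  move=> K cK e e0; apply: filterS (h2 K cK e e0) => n h; lra.
split => f cf csf; have gf : good f := conj cf csf.
- rewrite (J_Ri _ (good_bmeas gf)).
  rewrite (_ : (fun n => _) = (fun n => (Ri (p_ n) f)%:E)); last first.
    by apply/funext => n; rewrite (J_Ri _ (good_bmeas gf)).
  by apply/cvg_EFinP; exact: (cvg_good hT lcT h1 h3 h2 gf).
- rewrite (J_Ri _ (good_bmeas gf)).
  rewrite (_ : (fun n => _) = (fun n => (Ri (q_ n) f)%:E)); last first.
    by apply/funext => n; rewrite (J_Ri _ (good_bmeas gf)).
  apply/cvg_EFinP.
  exact: (cvg_good hT lcT (Hcv_swap h1) (Hsep_swap h3) h2' gf).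
Qed.

Lemma vague_real (m_ : nat -> {finite_measure set X -> \bar R}) (m : {finite_measure set X -> \bar R}) :
  vague_cvg m_ m -> forall f, good f -> (fun n => Ri (m_ n) f) @ \oo --> Ri m f.
Proof.
move=> H f gf; have := H f gf.1 gf.2; rewrite (J_Ri _ (good_bmeas gf)).
rewrite (_ : (fun n => _) = (fun n => (Ri (m_ n) f)%:E)); first by move/cvg_EFinP.
by apply/funext => n; rewrite (J_Ri _ (good_bmeas gf)).
Qed.

Lemma cvarEf (nu : {charge set X -> \bar R}) (A : set X) : measurable A ->
  cvar nu A = (fine (cpos nu A) + fine (cneg nu A))%:E.
Proof. by move=> mA; rewrite cvarE EFinD !fineK // fin_num_measure. Qed.

Lemma forth : vague_cvg p_ p -> vague_cvg q_ q ->
  cvague_cvg mu_ mu /\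
  (forall K : set T, compact K -> (limn_esup (fun n => cvar (mu_ n) K) <= cvar mu K)%E).
Proof.
move=> hp hn.
have rp := vague_real hp; have rn := vague_real hn.
split.
  move=> f cf csf; have gf : good f := conj cf csf.
  rewrite /cintegral.
  have eq (nu : {charge set X -> \bar R}) : (\int[cpos nu]_x (f x)%:E - \int[cneg nu]_x (f x)%:E)%E =
      (Ri (cpos nu) f - Ri (cneg nu) f)%:E.
    by rewrite !(J_Ri _ (good_bmeas gf)).
  rewrite eq (_ : (fun n => _) = (fun n => (Ri (cpos (mu_ n)) f - Ri (cneg (mu_ n)) f)%:E)); last first.
    by apply/funext => n; rewrite eq.
  by apply/cvg_EFinP; apply: cvgB; [exact: rp|exact: rn].
move=> K cK.
have mK : measurable (K : set X) by apply: closed_mB; exact: compact_closed.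
rewrite -(fineK (cvar_fin mu mK)); apply: ev_limsup => e e0.
have cfin : (cvar mu setT < +oo)%E.
  by rewrite -ge0_fin_numE ?cvar_fin //; exact: measure_ge0.
have e20 : 0 < e / 2 by rewrite divr_gt0.
have e40 : 0 < e / 4 by rewrite divr_gt0.
have [V [oV KV cV hV]] := outer_cpt hT lcT cfin cK e20.
have KVd : K `&` ~` V = set0.
  by apply/seteqP; split => // x [Kx nVx]; apply: nVx; exact: KV.
have [phi [cphi phi01 phiK phiV]] := urysohn01 (compact_closed hT cK) (open_closedC oV) KVd.
have gphi : good phi.
  apply: (good_of (B := V)) => // x px; apply: contrapT => nVx.
  by move: px; rewrite phiV // eqxx.
have bphi := good_bmeas gphi.
have mclV : measurable (closure V : set X) := closed_mB (@closed_closure _ _).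
have lo (m : {finite_measure set X -> \bar R}) : fine (m K) <= Ri m phi.
  rewrite -[fine (m K)]mul1r -Ri_cind //; apply: Ri_le => //; first exact: bmeas_indic.
  move=> x; case: (pselect (K x)) => Kx.
    by rewrite ind1 // phiK // mulr1.
  by rewrite ind0 // mulr0; case/andP: (phi01 x).
have up (m : {finite_measure set X -> \bar R}) : Ri m phi <= fine (m (closure V)).
  rewrite -[fine (m (closure V))]mul1r -Ri_cind //; apply: Ri_le => //; first exact: bmeas_indic.
  move=> x; case: (pselect (closure V x)) => Vx.
    by rewrite ind1 // mulr1; case/andP: (phi01 x).
  rewrite ind0 // mulr0 phiV // => Vx'; apply: Vx; exact: subset_closure.
have hV' : fine (p (closure V)) + fine (q (closure V)) <= fine (cvar mu K) + e / 2.
  have hV2 : (cvar mu (closure V) <= cvar mu K + (e / 2)%:E)%E := hV.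
  move: hV2; rewrite (cvarEf mu mclV) -(fineK (cvar_fin mu mK)) -EFinD lee_fin.
  by rewrite fineK // cvar_fin.
have /cvgrPdist_le /(_ _ e40) [N1 _ HN1] := rp phi gphi.
have /cvgrPdist_le /(_ _ e40) [N2 _ HN2] := rn phi gphi.
exists (maxn N1 N2) => // n /= hnn.
move: hnn; rewrite !geq_max => /andP[hn1 hn2].
have := HN1 n hn1; have := HN2 n hn2; rewrite !ler_norml => /andP[h1 h2] /andP[h3 h4].
rewrite (cvarEf (mu_ n) mK) lee_fin.
have := lo (p_ n); have := lo (q_ n); have := up p; have := up q.
lra.
Qed.
End main.

Theorem proposition2p7 (R : realType) (T : pseudoPMetricType R)
  (hT : hausdorff_space T) (lcT : locally_compact [set: T])
  (mu_ : nat -> {charge set Borel T -> \bar R}) (mu : {charge set Borel T -> \bar R})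
  (radon_mu_ : forall n, signed_radon (mu_ n)) (radon_mu : signed_radon mu) :
  (vague_cvg (fun n => cpos (mu_ n)) (cpos mu) /\
   vague_cvg (fun n => cneg (mu_ n)) (cneg mu)) <->
  (cvague_cvg mu_ mu /\
   forall K : set T, compact K ->
     (limn_esup (fun n => cvar (mu_ n) K) <= cvar mu K)%E).
Proof.
split.
- by case => hp hn; exact: (forth hT lcT hp hn).
- by case => hc hl; exact: (back hT lcT radon_mu hc hl).
Qed.
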